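(* Suppose $\mathcal{D}(\cdot)$ is a location-scale family on a convex set $\Theta\subseteq\mathbb{R}^d$, $z_\theta\sim\mathcal{D}(\theta)\iff z_\theta\overset{d}{=}(\Sigma_0+\Sigma(\theta))z_0+\mu_0+\mu\theta$, such that $\Sigma_0+\Sigma(\theta)$ has full rank for all $\theta\in\Theta$. Then $\mathcal{D}(\alpha\theta+(1-\alpha)\theta')\leq_{cx}\alpha\mathcal{D}(\theta)+(1-\alpha)\mathcal{D}(\theta')$ for all $\theta,\theta'\in\Theta$ and $\alpha\in(0,1)$.
   Context: Location-scale family: $z_0\sim\mathcal{D}_0$ is drawn from a fixed zero-mean distribution $\mathcal{D}_0$ on $\mathbb{R}^m$, $\Sigma_0\in\mathbb{R}^{m\times m}$, $\mu_0\in\mathbb{R}^m$ fixed, $\mu:\mathbb{R}^d\to\mathbb{R}^m$ and $\Sigma:\mathbb{R}^d\to\mathbb{R}^{m\times m}$ linear maps. For distributions $\mathcal{D}_1,\mathcal{D}_2$ on $\mathbb{R}^m$, $\mathcal{D}_1\leq_{cx}\mathcal{D}_2$ means $\mathbb{E}_{z\sim\mathcal{D}_1}g(z)\leq\mathbb{E}_{z\sim\mathcal{D}_2}g(z)$ for every convex $g:\mathbb{R}^m\to\mathbb{R}$. $\alpha\mathcal{D}(\theta)+(1-\alpha)\mathcal{D}(\theta')$ denotes the mixture distribution. *)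

(* Defs.v *)
From HB Require Import structures.
From mathcomp Require Import all_boot all_order all_algebra.
From mathcomp Require Import all_classical all_reals all_analysis.
Set Implicit Arguments. Unset Strict Implicit. Unset Printing Implicit Defensive.
Import Order.TTheory GRing.Theory Num.Theory.
Local Open Scope ring_scope.

Definition convex_fun (R : realType) (m : nat) (g : 'cV[R]_m -> R) : Prop :=
  forall (x y : 'cV[R]_m) (a : R), 0 <= a -> a <= 1 ->
    g (a *: x + (1 - a) *: y) <= a * g x + (1 - a) * g y.

Definition ls_sample (R : realType) (d m : nat) (T : Type)
  (Sigma0 : 'M[R]_m) (Sigma : 'cV[R]_d -> 'M[R]_m)
  (mu0 : 'cV[R]_m) (mu : 'M[R]_(m, d)) (z0 : T -> 'cV[R]_m)
  (theta : 'cV[R]_d) : T -> 'cV[R]_m :=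
  fun t => (Sigma0 + Sigma theta) *m z0 t + mu0 + mu *m theta.

(* Main.v *)
Require Import Defs.
From HB Require Import structures.
From mathcomp Require Import all_boot all_order all_algebra.
From mathcomp Require Import all_classical all_reals all_analysis.
Import Order.TTheory GRing.Theory Num.Theory.
Local Open Scope ring_scope.
Set Implicit Arguments. Unset Strict Implicit. Unset Printing Implicit Defensive.
From mathcomp Require Import ring lra.
From mathcomp Require Import measurable_realfun.

Section Aux.
Variable R : realType.

Lemma conv_comb m (g : 'cV[R]_m -> R) (M : R) (x : 'cV[R]_m) :
  convex_fun g -> g x <= M ->
  forall n (w : 'I_n -> R) (p : 'I_n -> 'cV[R]_m),
  (forall i, 0 <= w i) -> \sum_i w i <= 1 -> (forall i, g (p i) <= M) ->
  g (x + \sum_i w i *: (p i - x)) <= M.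
Proof.
move=> cg gx; elim=> [|n IH] w p w0 w1 gp.
  by rewrite big_ord0 addr0.
rewrite big_ord_recr /=.
rewrite big_ord_recr /= in w1.
set wn := w ord_max in w1 *.
have S0 : 0 <= \sum_(i < n) w (widen_ord (leqnSn n) i) by apply: sumr_ge0.
have wn0 : 0 <= wn by apply: w0.
have [wn_eq1 | wn_ne1] := eqVneq wn 1.
  have oth : forall i : 'I_n, w (widen_ord (leqnSn n) i) = 0.
    move=> i; apply/eqP; move: w1; rewrite wn_eq1 => w1'.
    have Sle : \sum_(i < n) w (widen_ord (leqnSn n) i) <= 0 by lra.
    have /psumr_eq0P H : \sum_(i < n) w (widen_ord (leqnSn n) i) = 0.
      by apply/eqP; rewrite eq_le Sle S0.
    by rewrite H.
  rewrite big1 ?add0r; last by move=> i _; rewrite oth scale0r.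
  by rewrite wn_eq1 scale1r addrC subrK.
have wn_lt1 : wn < 1 by rewrite lt_neqAle wn_ne1 /=; lra.
have d0 : 0 < 1 - wn by rewrite subr_gt0.
pose y := x + \sum_(i < n) (w (widen_ord (leqnSn n) i) / (1 - wn)) *: (p (widen_ord (leqnSn n) i) - x).
have gy : g y <= M.
  apply: IH => //.
  - by move=> i; apply: divr_ge0 => //; exact: ltW.
  - rewrite -mulr_suml ler_pdivrMr // mul1r; lra.
have -> : x + (\sum_(i < n) w (widen_ord (leqnSn n) i) *: (p (widen_ord (leqnSn n) i) - x) + wn *: (p ord_max - x))
   = wn *: p ord_max + (1 - wn) *: y.
  have -> : (1 - wn) *: y = (1 - wn) *: x + \sum_(i < n) w (widen_ord (leqnSn n) i) *: (p (widen_ord (leqnSn n) i) - x).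
    rewrite /y scalerDr scaler_sumr; congr (_ + _); apply: eq_bigr => i _.
    by rewrite scalerA mulrCA divff ?mulr1 // gt_eqF.
  set S := \sum_(i < n) _.
  rewrite scalerBr scalerBl scale1r.
  rewrite (addrC S) addrA [in X in _ = X]addrA; congr (_ + _).
  by rewrite addrCA.
apply: le_trans (cg _ _ _ wn0 (ltW wn_lt1)) _.
have := ler_wpM2l wn0 (gp ord_max).
have := ler_wpM2l (ltW d0) gy.
lra.
Qed.

Definition l1n m (u : 'cV[R]_m) := \sum_i `|u i 0|.

Definition Mball m (g : 'cV[R]_m -> R) :=
  `|g 0| + \sum_i (`|g (delta_mx i 0)| + `|g (- delta_mx i 0)|).

Lemma Mball_ge0 m (g : 'cV[R]_m -> R) : 0 <= Mball g.
Proof. by rewrite /Mball; apply: addr_ge0 => //; apply: sumr_ge0 => i _; apply: addr_ge0. Qed.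

Lemma ball_ub m (g : 'cV[R]_m -> R) : convex_fun g ->
  forall u, l1n u <= 1 -> g u <= Mball g.
Proof.
move=> cg u u1.
pose p i := if 0 <= u i 0 then (delta_mx i 0 : 'cV[R]_m) else - delta_mx i 0.
have S0 : forall i, 0 <= `|g (delta_mx i 0)| + `|g (- delta_mx i 0)| by move=> i; apply: addr_ge0.
have : g (0 + \sum_i `|u i 0| *: (p i - 0)) <= Mball g.
  apply: conv_comb => //.
  - by rewrite /Mball ler_wpDr ?real_ler_norm ?realE ?lexx //; [apply: sumr_ge0 | apply: le_total].
  - move=> i; rewrite /Mball (bigD1 i) //=.
    have : 0 <= \sum_(j | j != i) (`|g (delta_mx j 0)| + `|g (- delta_mx j 0)|).
      by apply: sumr_ge0 => j _; exact: S0.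
    rewrite /p; case: ifP => _.
    + have := ler_norm (g (delta_mx i 0)); have := normr_ge0 (g (- delta_mx i 0)); have := normr_ge0 (g 0); lra.
    + have := ler_norm (g (- delta_mx i 0)); have := normr_ge0 (g (delta_mx i 0)); have := normr_ge0 (g 0); lra.
have -> : 0 + \sum_i `|u i 0| *: (p i - 0) = u.
  rewrite add0r [RHS]matrix_sum_delta; apply: eq_bigr => i _.
  rewrite big_ord1 subr0 /p; case: ifP => h.
  + by rewrite ger0_norm.
  + by rewrite ltr0_norm ?ltNge ?h // scaleNr scalerN opprK.
by [].
Qed.

Lemma conv_lb m (g : 'cV[R]_m -> R) : convex_fun g ->
  forall y, - (2 * (`|g 0| + Mball g)) * (1 + l1n y) <= g y.
Proof.
move=> cg y.
set r := l1n y.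
have r0 : 0 <= r by apply: sumr_ge0.
pose w := - ((1 + r)^-1) *: y.
have gw : g w <= Mball g.
  apply: ball_ub => //; rewrite /l1n.
  under eq_bigr => i _ do rewrite mxE normrM normrN.
  rewrite -mulr_sumr -/(l1n y) -/r ger0_norm ?invr_ge0; last by lra.
  rewrite ler_pdivrMl; lra.
pose a := (2 + r)^-1.
have a0 : 0 <= a by rewrite invr_ge0; lra.
have a1 : a <= 1 by rewrite invf_le1; lra.
have : g (a *: y + (1 - a) *: w) <= a * g y + (1 - a) * g w := cg _ _ _ a0 a1.
have -> : a *: y + (1 - a) *: w = 0.
  rewrite /w scalerA -scalerDl; apply/eqP; rewrite scaler_eq0; apply/orP; left.
  rewrite /a; apply/eqP; field; lra.
move=> H.
have H2 : (2 + r) * g 0 <= g y + (1 + r) * g w.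
  have -> : g y + (1 + r) * g w = (2 + r) * (a * g y + (1 - a) * g w).
    rewrite /a; field; lra.
  by rewrite ler_pM2l //; lra.
have nG : - g 0 <= `|g 0| by rewrite -normrN ler_norm.
have M0 := Mball_ge0 g.
have P1 : 0 <= (1 + r) * (Mball g - g w) by apply: mulr_ge0; lra.
have P2 : 0 <= r * (`|g 0| + g 0) by apply: mulr_ge0; lra.
have n0 := normr_ge0 (g 0).
have P3 : 0 <= r * (`|g 0| + Mball g) by apply: mulr_ge0; lra.
nra.
Qed.

Definition conv1 (psi : R -> R) := forall a x y, 0 <= a -> a <= 1 ->
  psi (a * x + (1 - a) * y) <= a * psi x + (1 - a) * psi y.

Lemma conv1_bound psi : conv1 psi -> forall x h, `|h| <= 1 ->
  `|psi (x + h) - psi x| <= `|h| * (`|psi (x + 1) - psi x| + `|psi (x - 1) - psi x|).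
Proof.
move=> cp x h h1.
set K1 := `|psi (x + 1) - psi x|. set K2 := `|psi (x - 1) - psi x|.
have k1 : psi (x + 1) - psi x <= K1 by exact: ler_norm.
have k2 : psi (x - 1) - psi x <= K2 by exact: ler_norm.
rewrite ler_norml; have [h0|h0] := leP 0 h.
- rewrite ger0_norm // in h1 *.
  have i1 : psi (x + h) <= h * psi (x + 1) + (1 - h) * psi x.
    have := cp h (x + 1) x h0 h1.
    by have -> : h * (x + 1) + (1 - h) * x = x + h by ring.
  have a0 : 0 <= (1 + h)^-1 by rewrite invr_ge0; lra.
  have a1 : (1 + h)^-1 <= 1 by rewrite invf_le1; lra.
  have i2 : (1 + h) * psi x <= psi (x + h) + h * psi (x - 1).
    have := cp _ (x + h) (x - 1) a0 a1.
    have -> : (1 + h)^-1 * (x + h) + (1 - (1 + h)^-1) * (x - 1) = x by field; lra.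
    move=> H; have hp : 0 <= 1 + h by lra.
    have := ler_wpM2l hp H.
    have -> : (1 + h) * ((1 + h)^-1 * psi (x + h) + (1 - (1 + h)^-1) * psi (x - 1))
       = psi (x + h) + h * psi (x - 1) by field; lra.
    by [].
  have q1 := ler_wpM2l h0 k1. have q2 := ler_wpM2l h0 k2.
  have q3 : 0 <= h * K1 by apply: mulr_ge0 => //; exact: normr_ge0.
  have q4 : 0 <= h * K2 by apply: mulr_ge0 => //; exact: normr_ge0.
  apply/andP; split; nra.
- rewrite ltr0_norm // in h1 *.
  set k := - h in h1 *.
  have k0 : 0 <= k by rewrite /k; lra.
  have -> : x + h = x - k by rewrite /k opprK.
  have i1 : psi (x - k) <= k * psi (x - 1) + (1 - k) * psi x.
    have := cp k (x - 1) x k0 h1.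
    by have -> : k * (x - 1) + (1 - k) * x = x - k by ring.
  have a0 : 0 <= (1 + k)^-1 by rewrite invr_ge0; lra.
  have a1 : (1 + k)^-1 <= 1 by rewrite invf_le1; lra.
  have i2 : (1 + k) * psi x <= psi (x - k) + k * psi (x + 1).
    have := cp _ (x - k) (x + 1) a0 a1.
    have -> : (1 + k)^-1 * (x - k) + (1 - (1 + k)^-1) * (x + 1) = x by field; lra.
    move=> H; have hp : 0 <= 1 + k by lra.
    have := ler_wpM2l hp H.
    have -> : (1 + k) * ((1 + k)^-1 * psi (x - k) + (1 - (1 + k)^-1) * psi (x + 1))
       = psi (x - k) + k * psi (x + 1) by field; lra.
    by [].
  have q1 := ler_wpM2l k0 k1. have q2 := ler_wpM2l k0 k2.
  have q3 : 0 <= k * K1 by apply: mulr_ge0 => //; exact: normr_ge0.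
  have q4 : 0 <= k * K2 by apply: mulr_ge0 => //; exact: normr_ge0.
  apply/andP; split; nra.
Qed.
End Aux.


Section Meas.
Variable R : realType.
Context (dT : measure_display) (T : measurableType dT).
Local Open Scope classical_set_scope.

Definition rn (n : nat) (x : R) : R := (Num.floor (x * n.+1%:R))%:~R / n.+1%:R.

Lemma rn_nd n : nondecreasing_fun (rn n).
Proof.
move=> x y xy; rewrite /rn ler_pM2r ?invr_gt0 ?ltr0Sn // ler_int; apply: le_floor.
by rewrite ler_pM2r // ltr0Sn.
Qed.

Lemma rn_err n x : `|rn n x - x| <= harmonic n.
Proof.
rewrite /rn /=. set N : R := n.+1%:R. have N0 : 0 < N by apply: ltr0Sn.
have h1 := floor_le (x * N). have h2 := floorD1_gt (x * N). rewrite intrD in h2.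
move: h1 h2; set z : R := (Num.floor (x * N))%:~R => h1 h2.
have -> : z / N - x = (z - x * N) / N by field; rewrite gt_eqF.
have Ni : 0 <= N^-1 by rewrite invr_ge0 ltW.
rewrite normrM (ger0_norm Ni).
rewrite -[X in _ <= X]mul1r ler_pM2r ?invr_gt0 //.
rewrite ler_norml; apply/andP; split; rewrite /= in h2; lra.
Qed.

Lemma mfunT (f : T -> R) : measurable_fun setT f ->
  forall Y, measurable Y -> measurable (f @^-1` Y).
Proof. by move=> mf Y mY; have := mf measurableT Y mY; rewrite setTI. Qed.

Lemma meas_conv m : forall (g : 'cV[R]_m -> R), convex_fun g ->
  forall v : T -> 'cV[R]_m, (forall i, measurable_fun setT (fun t => v t i 0)) ->
  measurable_fun setT (fun t => g (v t)).
Proof.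
elim: m => [|m IH] g cg v mv.
  have -> : (fun t => g (v t)) = cst (g 0) by apply: funext => t; rewrite /= [v t]flatmx0.
  exact: measurable_cst.
pose gc (c : R) (y : 'cV[R]_m) : R := g (col_mx (c%:M : 'cV[R]_1) y).
have cgc : forall c, convex_fun (gc c).
  move=> c x y a a0 a1; rewrite /gc.
  have -> : col_mx (c%:M : 'cV[R]_1) (a *: x + (1 - a) *: y) = a *: col_mx c%:M x + (1 - a) *: col_mx c%:M y.
    by rewrite !scale_col_mx add_col_mx -scalerDl (addrCA a) subrr addr0 scale1r.
  exact: cg.
pose v' t : 'cV[R]_m := dsubmx (v t : 'M[R]_(1 + m, 1)).
have mv' : forall i, measurable_fun setT (fun t => v' t i 0).
  move=> i; rewrite /v'; under eq_fun do rewrite mxE. exact: mv.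
have mG : forall c, measurable_fun setT (fun t => gc c (v' t)) := fun c => IH _ (cgc c) _ mv'.
pose v0 t := v t ord0 0.
have vE : forall t, v t = col_mx ((v0 t)%:M) (v' t).
  move=> t; rewrite -[LHS](@vsubmxK _ 1 m 1).
  have -> : usubmx (v t : 'M[R]_(1 + m, 1)) = (v0 t)%:M.
    rewrite [LHS]mx11_scalar; congr (_%:M); rewrite mxE /v0; congr (v t _ 0); exact: val_inj.
  by [].
pose psi t c := gc c (v' t).
have cpsi : forall t, conv1 (psi t).
  move=> t a x y a0 a1; rewrite /psi /gc.
  have -> : col_mx ((a * x + (1 - a) * y)%:M : 'cV[R]_1) (v' t) = a *: col_mx x%:M (v' t) + (1 - a) *: col_mx y%:M (v' t).
    rewrite !scale_col_mx add_col_mx -scalerDl (addrCA a) subrr addr0 scale1r; congr col_mx.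
    by rewrite raddfD /= -!scale_scalar_mx.
  exact: cg.
pose h n t := psi t (rn n (v0 t)).
apply: (@measurable_fun_cvg _ _ _ _ h).
- move=> n; set r := fun t => rn n (v0 t).
  have mr : measurable_fun setT r.
    exact: (measurableT_comp (nondecreasing_measurable measurableT (@rn_nd n)) (mv ord0)).
  move=> _ Y mY; rewrite setTI.
  pose N : R := n.+1%:R.
  have -> : h n @^-1` Y = \bigcup_k
     ((r @^-1` [set (k%:Z)%:~R / N] `&` (fun t => gc ((k%:Z)%:~R / N) (v' t)) @^-1` Y) `|`
      (r @^-1` [set (- k%:Z)%:~R / N] `&` (fun t => gc ((- k%:Z)%:~R / N) (v' t)) @^-1` Y)).
    apply/seteqP; split => t /=.
    + move=> Yt.
      have [k [hk|hk]] : exists k : nat, Num.floor (v0 t * N) = k%:Z \/ Num.floor (v0 t * N) = - k%:Z.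
        by case: (Num.floor _) => k; [exists k; left | exists k.+1; right; rewrite NegzE].
      * exists k => //; left; move: Yt hk; rewrite /h /psi /r /rn /N /= => Yt hk.
        by rewrite hk in Yt *.
      * exists k => //; right; move: Yt hk; rewrite /h /psi /r /rn /N /= => Yt hk.
        by rewrite hk in Yt *.
    + have -> : h n t = gc (r t) (v' t) by [].
      by move=> [k _ [[/= -> Yt]|[/= -> Yt]]].
  apply: bigcupT_measurable => k; apply: measurableU; apply: measurableI.
  + exact: mfunT mr _ (measurable_set1 _).
  + exact: mfunT (mG _) _ mY.
  + exact: mfunT mr _ (measurable_set1 _).
  + exact: mfunT (mG _) _ mY.
- move=> t _.
  have gE : g (v t) = psi t (v0 t) by rewrite /psi /gc -vE.
  rewrite gE.
  set c := psi t (v0 t).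
  set K := `|psi t (v0 t + 1) - psi t (v0 t)| + `|psi t (v0 t - 1) - psi t (v0 t)|.
  have bnd : forall n, `|h n t - c| <= harmonic n * K.
    move=> n; rewrite /h /c.
    have e := rn_err n (v0 t).
    have e1 : `|rn n (v0 t) - v0 t| <= 1.
      by apply: le_trans e _; rewrite /= invf_le1 ?ltr0Sn // ler1n.
    have := conv1_bound (cpsi t) (v0 t) e1.
    have -> : v0 t + (rn n (v0 t) - v0 t) = rn n (v0 t) by rewrite addrC subrK.
    move=> H; apply: le_trans H _.
    by rewrite ler_wpM2r // addr_ge0.
  apply: (@squeeze_cvgr _ _ _ _ (fun n => c - harmonic n * K) (fun n => c + harmonic n * K)).
  + apply: nearW => n; have := bnd n; rewrite ler_norml => /andP[b1 b2].
    apply/andP; split; lra.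
  + have H : (fun n => c - harmonic n * K) @ \oo --> c - 0 * K.
      apply: cvgB; first exact: cvg_cst.
      by apply: cvgMr_tmp; exact: cvg_harmonic.
    by rewrite mul0r subr0 in H.
  + have H : (fun n => c + harmonic n * K) @ \oo --> c + 0 * K.
      apply: cvgD; first exact: cvg_cst.
      by apply: cvgMr_tmp; exact: cvg_harmonic.
    by rewrite mul0r addr0 in H.
Qed.
End Meas.


Section Integ.
Variable R : realType.
Context (dT : measure_display) (T : measurableType dT) (P : probability T R).
Local Open Scope ereal_scope.

Lemma int_or_infty (f L : T -> R) :
  measurable_fun setT f -> P.-integrable setT (EFin \o L) ->
  (forall t, (- L t <= f t)%R) ->
  P.-integrable setT (EFin \o f) \/ \int[P]_t (f t)%:E = +oo.
Proof.
move=> mf iL fL.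
set F := EFin \o f.
have mF : measurable_fun setT F by apply/measurable_EFinP.
have [If|nIf] := pselect (P.-integrable setT F); first by left.
right.
have : ~ (\int[P]_t `|F t| < +oo) by move=> H; apply: nIf; apply/integrableP; split.
rewrite ltey => /negP; rewrite negbK => /eqP habs.
have Fp0 : forall t, 0 <= F^\+ t by move=> t; exact: funepos_ge0.
have Fn0 : forall t, 0 <= F^\- t by move=> t; exact: funeneg_ge0.
rewrite -/(abse \o F) fune_abse ge0_integralD // in habs; last 2 first.
  exact: measurable_funepos. exact: measurable_funeneg.
have negfin : \int[P]_t F^\- t < +oo.
  apply: (@le_lt_trans _ _ (\int[P]_t `|(L t)%:E|)); last by move/integrableP: iL => [].
  apply: ge0_le_integral => //.
  - exact: measurable_funeneg.
  - apply: measurableT_comp => //; exact: measurable_int iL.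
  - move=> t _; rewrite funenegE /F /= ge_max !lee_fin normr_ge0 andbT.
    apply: le_trans (ler_norm _); have := fL t; lra.
have neg0 : 0 <= \int[P]_t F^\- t by apply: integral_ge0.
have pinf : \int[P]_t F^\+ t = +oo.
  move: habs negfin neg0; case: (\int[P]_t F^\+ t) => [r| |] //;
  case: (\int[P]_t F^\- t) => [s| |] //.
rewrite (integralE _ _ F) pinf addye //.
by move: negfin neg0; case: (\int[P]_t F^\- t).
Qed.
End Integ.


Section Main.
Variable R : realType.
Context (dT : measure_display) (T : measurableType dT) (P : probability T R).
Variables (m : nat) (z0 : T -> 'cV[R]_m).
Hypothesis z0_int : forall i : 'I_m, P.-integrable setT (fun t => (z0 t i 0)%:E).

Lemma coord_int (A : 'M[R]_m) (b : 'cV[R]_m) i :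
  P.-integrable setT (EFin \o (fun t => (A *m z0 t + b) i 0)).
Proof.
apply: (@eq_integrable _ _ _ _ _ measurableT (fun t => (\sum_j (A i j)%:E * (z0 t j 0%R)%:E + (EFin \o cst (b i 0%R)) t)%E)).
  by move=> t _; rewrite /= !mxE sumEFin EFinD.
apply: (integrableD measurableT); last exact: finite_measure_integrable_cst.
apply: (integrable_sum measurableT) => j _; apply: (integrableZl measurableT); exact: z0_int.
Qed.

Lemma coord_meas (A : 'M[R]_m) (b : 'cV[R]_m) i :
  measurable_fun setT (fun t => (A *m z0 t + b) i 0).
Proof. exact/measurable_EFinP/(measurable_int P (coord_int A b i)). Qed.

Lemma lb_int (A : 'M[R]_m) (b : 'cV[R]_m) (C : R) :
  P.-integrable setT (EFin \o (fun t => C * (1 + l1n (A *m z0 t + b)))).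
Proof.
have H1 : P.-integrable setT (fun t => \sum_i (abse \o (EFin \o (fun t => (A *m z0 t + b) i 0%R))) t).
  apply: (integrable_sum measurableT) => i _; apply: integrable_abse; exact: coord_int.
have H2 := integrableD measurableT (finite_measure_integrable_cst P 1%R measurableT) H1.
have H3 := integrableZl measurableT C H2.
apply: eq_integrable H3 => // t _.
by rewrite /= /l1n sumEFin.
Qed.
End Main.


Lemma ls_affine (R : realType) (d m : nat) (T : Type)
  (Sigma0 : 'M[R]_m) (Sigma : {linear 'cV[R]_d -> 'M[R]_m})
  (mu0 : 'cV[R]_m) (mu : 'M[R]_(m, d)) (z0 : T -> 'cV[R]_m) th th' (a : R) t :
  ls_sample Sigma0 Sigma mu0 mu z0 (a *: th + (1 - a) *: th') t =
  a *: ls_sample Sigma0 Sigma mu0 mu z0 th t + (1 - a) *: ls_sample Sigma0 Sigma mu0 mu z0 th' t.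
Proof.
rewrite /ls_sample linearD !linearZ /= mulmxDr !mulmxDl -!scalemxAl -!scalemxAr.
move: (Sigma0 *m z0 t) (Sigma th *m z0 t) (Sigma th' *m z0 t) (mu *m th) (mu *m th') => A B C D E.
by apply/matrixP => i j; rewrite !mxE; ring.
Qed.

Unset Implicit Arguments.
Set Strict Implicit.

Theorem propositionA1 (R : realType) (d m : nat)
  (dT : measure_display) (T : measurableType dT) (P : probability T R)
  (z0 : T -> 'cV[R]_m)
  (z0_meas : forall i : 'I_m, measurable_fun setT (fun t => z0 t i 0))
  (z0_int : forall i : 'I_m, P.-integrable setT (fun t => (z0 t i 0)%:E))
  (z0_mean : forall i : 'I_m, (\int[P]_t (z0 t i 0)%:E = 0)%E)
  (Sigma0 : 'M[R]_m) (Sigma : {linear 'cV[R]_d -> 'M[R]_m})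
  (mu0 : 'cV[R]_m) (mu : 'M[R]_(m, d))
  (Theta : set 'cV[R]_d) (Theta_convex : convex_set Theta)
  (full_rank : forall theta, Theta theta -> Sigma0 + Sigma theta \in unitmx) :
  forall (theta theta' : 'cV[R]_d) (alpha : R),
    Theta theta -> Theta theta' -> 0 < alpha < 1 ->
    forall g : 'cV[R]_m -> R, convex_fun g ->
      (\int[P]_t (g (ls_sample Sigma0 Sigma mu0 mu z0
                       (alpha *: theta + (1 - alpha) *: theta') t))%:E
       <= alpha%:E * \int[P]_t (g (ls_sample Sigma0 Sigma mu0 mu z0 theta t))%:E
          + (1 - alpha)%:E * \int[P]_t (g (ls_sample Sigma0 Sigma mu0 mu z0 theta' t))%:E)%E.
Proof.
move=> theta theta' alpha _ _ /andP[a0 a1] g cg.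
set z := ls_sample Sigma0 Sigma mu0 mu z0.
have zE : forall th t, z th t = (Sigma0 + Sigma th) *m z0 t + (mu0 + mu *m th).
  by move=> th t; rewrite /z /ls_sample addrA.
have fact : forall th, measurable_fun setT (fun t => g (z th t)) /\
   exists L : T -> R, P.-integrable setT (EFin \o L) /\ forall t, (- L t <= g (z th t))%R.
  move=> th; split.
  - apply: (meas_conv cg) => i.
    rewrite (_ : (fun t => z th t i 0) = (fun t => ((Sigma0 + Sigma th) *m z0 t + (mu0 + mu *m th)) i 0)).
      exact: coord_meas.
    by apply: funext => t; rewrite zE.
  - exists (fun t => 2 * (`|g 0| + Mball g) * (1 + l1n (z th t))); split.
    + have := lb_int z0_int (Sigma0 + Sigma th) (mu0 + mu *m th) (2 * (`|g 0| + Mball g)).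
      by apply: eq_integrable => // t _; rewrite /= zE.
    + by move=> t; rewrite -mulNr; exact: conv_lb.
have cases : forall th, P.-integrable setT (EFin \o (fun t => g (z th t))) \/
    (\int[P]_t (g (z th t))%:E = +oo)%E.
  move=> th; have [mf [L [iL hL]]] := fact th; exact: int_or_infty mf iL hL.
have notNy : forall th, (\int[P]_t (g (z th t))%:E != -oo)%E.
  move=> th; case: (cases th) => [I|->] //.
  by have := integrable_fin_num measurableT I; rewrite fin_numE => /andP[].
have notNy' : forall th (c : R), (0 <= c)%R -> (c%:E * \int[P]_t (g (z th t))%:E != -oo)%E.
  move=> th c c0; case: (cases th) => [I|->].
    by move: (integrable_fin_num measurableT I) => /fineK <-.
  have [->|c0'] := eqVneq c 0%R; first by rewrite mul0e.
  by rewrite gt0_muley // lte_fin lt_neqAle eq_sym c0' c0.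
have pw : forall t, (g (z (alpha *: theta + (1 - alpha) *: theta') t) <=
    alpha * g (z theta t) + (1 - alpha) * g (z theta' t))%R.
  move=> t; rewrite /z ls_affine; apply: cg; lra.
case: (cases theta) => [I1|E1]; last first.
  rewrite E1 gt0_muley ?lte_fin // addye ?leey //; apply: notNy'; lra.
case: (cases theta') => [I2|E2]; last first.
  rewrite E2 gt0_muley ?lte_fin ?subr_gt0 // addey ?leey //; apply: notNy'; lra.
pose h := fun t => (alpha * g (z theta t) + (1 - alpha) * g (z theta' t))%R.
have Ih : P.-integrable setT (EFin \o h).
  have := integrableD measurableT (integrableZl measurableT alpha I1) (integrableZl measurableT (1 - alpha) I2).
  by apply: eq_integrable => // t _; rewrite /h /= EFinD !EFinM.
have [mfa [La [iLa hLa]]] := fact (alpha *: theta + (1 - alpha) *: theta').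
have Ifa : P.-integrable setT (EFin \o (fun t => g (z (alpha *: theta + (1 - alpha) *: theta') t))).
  apply: (@le_integrable _ _ _ _ _ measurableT _ (EFin \o (fun t => `|h t| + `|La t|)%R)).
  - exact/measurable_EFinP.
  - move=> t _; rewrite /= lee_fin.
    have := hLa t; have := pw t; rewrite -/(h t).
    have := ler_norm (h t); have := ler_norm (La t); have := normr_ge0 (h t); have := normr_ge0 (La t).
    set u := g _; move=> *.
    rewrite (ger0_norm (addr_ge0 (normr_ge0 _) (normr_ge0 _))).
    rewrite ler_norml; apply/andP; split; lra.
  - have := integrableD measurableT (integrable_abse Ih) (integrable_abse iLa).
    by apply: eq_integrable => // t _.
have -> : (alpha%:E * \int[P]_t (g (z theta t))%:E + (1 - alpha)%:E * \int[P]_t (g (z theta' t))%:E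
    = \int[P]_t (h t)%:E)%E.
  rewrite -(integralZl measurableT I1) -(integralZl measurableT I2).
  rewrite -(integralD measurableT (integrableZl measurableT alpha I1) (integrableZl measurableT (1 - alpha) I2)).
  by apply: eq_integral => t _.
apply: (le_integral measurableT Ifa Ih) => t _; rewrite lee_fin; exact: pw.
Qed.
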